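(* Let $G$ be a group acting linearly and isometrically on a real Hilbert space $M$, and let $X$ be a random variable in $M$ with $\mathbb{E}(\|X\|^2)<+\infty$ and $t_0=\mathbb{E}(X)$, where $t_0$ is a fixed point of the action ($g\cdot t_0=t_0$ for all $g\in G$). If the support of the law of $X$ contains a point which is not a fixed point of the action, then $[t_0]$ is not a Fréchet mean of $[X]$.
   Context: $M$ is a real Hilbert space with norm $\|\cdot\|$; the action is linear and isometric ($\|g\cdot x\|=\|x\|$). $[m]=\{g\cdot m:g\in G\}$, $d_Q([a],[b])=\inf_{g}\|g\cdot a-b\|$, $F(m)=\mathbb{E}\big(\inf_g\|g\cdot X-m\|^2\big)$, and $[m_\star]$ is a Fréchet mean of $[X]$ if $m_\star$ globally minimises $F$. The support of $X$ is the set of $y$ with $\mathbb{P}(X\in B(y,r))>0$ for all $r>0$. *)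

(* Defs.v *)
From HB Require Import structures.
From mathcomp Require Import all_boot all_order all_algebra.
From mathcomp Require monoid.
From mathcomp Require Import all_classical all_reals all_analysis.

Set Implicit Arguments.
Unset Strict Implicit.
Unset Printing Implicit Defensive.

Import Order.TTheory GRing.Theory Num.Theory.
Import numFieldNormedType.Exports.

Local Open Scope classical_set_scope.
Local Open Scope ring_scope.

(* A real Hilbert space: a complete normed space M whose norm comes from the
   inner product [ip] (bilinear -- linear in the first argument and symmetric --
   with <x,x> = ||x||^2; positive definiteness follows from the norm axioms). *)
Definition hilbert_inner (R : realType) (M : completeNormedModType R)
  (ip : M -> M -> R) : Prop :=
  [/\ (forall (a : R) (x y z : M), ip (a *: x + y) z = a * ip x z + ip y z),
      (forall x y : M, ip x y = ip y x) &
      (forall x : M, ip x x = `|x| ^+ 2)].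

Definition linear_isometric_action (R : realType) (M : normedModType R)
  (G : monoid.Group.type) (act : G -> M -> M) : Prop :=
  [/\ (forall x : M, act monoid.one x = x),
      (forall (g h : G) (x : M), act (monoid.mul g h) x = act g (act h x)),
      (forall (g : G) (a : R) (x y : M), act g (a *: x + y) = a *: act g x + act g y) &
      (forall (g : G) (x : M), `|act g x| = `|x|)].

Definition borel_measurable_into d (T : measurableType d) (R : realType)
  (M : normedModType R) (X : T -> M) : Prop :=
  forall U : set M, open U -> measurable (X @^-1` U).

(* The quotient distance d_Q([a],[b]) = inf_g ||g.a - b||. *)
Definition dQ (R : realType) (M : normedModType R) (G : monoid.Group.type)
  (act : G -> M -> M) (a b : M) : R :=
  inf [set `|act g a - b| | g in [set: G]].

Definition frechet_fun d (T : measurableType d) (R : realType)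
  (P : probability T R) (M : normedModType R) (G : monoid.Group.type)
  (act : G -> M -> M) (X : T -> M) (m : M) : \bar R :=
  (\int[P]_w ((dQ act (X w) m) ^+ 2)%:E)%E.

Definition is_frechet_mean d (T : measurableType d) (R : realType)
  (P : probability T R) (M : normedModType R) (G : monoid.Group.type)
  (act : G -> M -> M) (X : T -> M) (mstar : M) : Prop :=
  forall m : M, (frechet_fun P act X mstar <= frechet_fun P act X m)%E.

(* E(X) = t0, as a (weak/Pettis) expectation in the Hilbert space: for every y,
   E(<X, y>) = <t0, y>.  Under E||X||^2 < oo this is the Bochner expectation. *)
Definition expectation_is d (T : measurableType d) (R : realType)
  (P : probability T R) (M : normedModType R) (ip : M -> M -> R)
  (X : T -> M) (t0 : M) : Prop :=
  forall y : M, (\int[P]_w (ip (X w) y)%:E = (ip t0 y)%:E)%E.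

Definition in_support d (T : measurableType d) (R : realType)
  (P : probability T R) (M : normedModType R) (X : T -> M) (y : M) : Prop :=
  forall r : R, 0 < r -> (0 < P (X @^-1` ball y r))%E.

(* Main.v *)
Require Import Defs.
From HB Require Import structures.
From mathcomp Require Import all_boot all_order all_algebra.
From mathcomp Require monoid.
From mathcomp Require Import all_classical all_reals all_analysis.
From mathcomp Require Import lra.
Import Order.TTheory GRing.Theory Num.Theory.
Import numFieldNormedType.Exports.
Local Open Scope classical_set_scope.
Local Open Scope ring_scope.
Set Implicit Arguments.
Unset Strict Implicit.
Lemma zm1 (V : zmodType) (a b x y t : V) :
  (a - t - (x - t)) - (b - t - (y - t)) = (a - b) - (x - y).
Proof.
rewrite [x - t]addrC [y - t]addrC !addrKA.
by rewrite opprB addrACA opprB [RHS]addrACA [- b + _]addrC.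
Qed.
Lemma ip0l (R : realType) (M : completeNormedModType R) (ip : M -> M -> R)
  (H : hilbert_inner ip) z : ip 0 z = 0.
Proof.
case: H => Hl _ _; have := Hl 1 0 0 z; rewrite scale1r addr0 mul1r.
move=> h; lra.
Qed.

Lemma ipDl (R : realType) (M : completeNormedModType R) (ip : M -> M -> R)
  (H : hilbert_inner ip) x y z : ip (x + y) z = ip x z + ip y z.
Proof. by case: H => Hl _ _; rewrite -[x]scale1r Hl mul1r scale1r. Qed.

Lemma ipZl (R : realType) (M : completeNormedModType R) (ip : M -> M -> R)
  (H : hilbert_inner ip) a x z : ip (a *: x) z = a * ip x z.
Proof.
have := ip0l H z; case: H => Hl _ _ h0.
by rewrite -[a *: x]addr0 Hl h0 addr0.
Qed.

Lemma ipNl (R : realType) (M : completeNormedModType R) (ip : M -> M -> R)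
  (H : hilbert_inner ip) x z : ip (- x) z = - ip x z.
Proof. by rewrite -scaleN1r (ipZl H) mulN1r. Qed.

Lemma ipBl (R : realType) (M : completeNormedModType R) (ip : M -> M -> R)
  (H : hilbert_inner ip) x y z : ip (x - y) z = ip x z - ip y z.
Proof. by rewrite (ipDl H) (ipNl H). Qed.

Lemma ipC (R : realType) (M : completeNormedModType R) (ip : M -> M -> R)
  (H : hilbert_inner ip) x y : ip x y = ip y x.
Proof. by case: H. Qed.

Lemma ipn (R : realType) (M : completeNormedModType R) (ip : M -> M -> R)
  (H : hilbert_inner ip) x : ip x x = `|x| ^+ 2.
Proof. by case: H. Qed.

Lemma normD2 (R : realType) (M : completeNormedModType R) (ip : M -> M -> R)
  (H : hilbert_inner ip) x y : `|x + y| ^+ 2 = `|x| ^+ 2 + 2 * ip x y + `|y| ^+ 2.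
Proof.
rewrite -!(ipn H) !(ipDl H) (ipC H y (x + y)) (ipC H x (x + y)) !(ipDl H).
rewrite (ipC H y x); lra.
Qed.

Lemma normB2 (R : realType) (M : completeNormedModType R) (ip : M -> M -> R)
  (H : hilbert_inner ip) x y : `|x - y| ^+ 2 = `|x| ^+ 2 - 2 * ip x y + `|y| ^+ 2.
Proof.
rewrite (normD2 H) normrN (ipC H x (- y)) (ipNl H) (ipC H y x); lra.
Qed.

Lemma actB (R : realType) (M : normedModType R) (G : monoid.Group.type)
  (act : G -> M -> M) (H : linear_isometric_action act) g x y :
  act g (x - y) = act g x - act g y.
Proof.
case: H => _ _ Hl _.
have e : x - y = (-1) *: y + x by rewrite scaleN1r addrC.
by rewrite e Hl scaleN1r addrC.
Qed.
Lemma meas_open d (T : measurableType d) (R : realType) (f : T -> R) :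
  (forall U : set R, open U -> measurable (f @^-1` U)) -> measurable_fun setT f.
Proof.
move=> hf; apply: (measurability _ (measurable_realfun.RGenOInfty.measurableE R)) => /= _ [_ [x ->] <-].
apply: measurableI => //; apply: hf.
exact: itv_open_ends_open.
Qed.

Lemma meas_norm d (T : measurableType d) (R : realType) (M : normedModType R)
  (X : T -> M) (hX : borel_measurable_into X) (u : M) :
  measurable_fun setT (fun w => `|X w + u|).
Proof.
apply: meas_open => U oU.
have co : open ((fun x : M => `|x + u|) @^-1` U).
  apply: open_comp => // x _.
  apply: (continuous_comp (f := fun x : M => x + u)); last exact: norm_continuous.
  by apply: continuousD; [exact: cvg_id | exact: cvg_cst].
exact: (hX _ co).
Qed.
Lemma le_ge0_int d (T : measurableType d) (R : realType)
  (mu : {measure set T -> \bar R}) (f g : T -> \bar R) :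
  (forall x, (0 <= f x)%E) -> (forall x, (f x <= g x)%E) ->
  (\int[mu]_x f x <= \int[mu]_x g x)%E.
Proof.
move=> f0 fg.
have g0 : forall x, (0 <= g x)%E by move=> x; exact: le_trans (f0 x) (fg x).
rewrite (ge0_integralTE mu f0) (ge0_integralTE mu g0).
apply: ereal_sup_le => _ [h hf <-]; exists h => // x.
exact: le_trans (hf x) (fg x).
Qed.
Lemma int_bound d (T : measurableType d) (R : realType) (P : probability T R)
  (f g : T -> R) : measurable_fun setT f ->
  P.-integrable setT (fun w => (g w)%:E) -> (forall w, `|f w| <= g w) ->
  P.-integrable setT (fun w => (f w)%:E).
Proof.
move=> mf ig fg; apply: le_integrable ig => //.
  exact/measurable_realfun.measurable_EFinP.
move=> w _; rewrite !abse_EFin lee_fin.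
by rewrite (ger0_norm (le_trans (normr_ge0 _) (fg w))).
Qed.

Lemma int_cst d (T : measurableType d) (R : realType) (P : probability T R)
  (k : R) : P.-integrable setT (fun w => k%:E).
Proof. exact: (finite_measure_integrable_cst P k measurableT). Qed.

Lemma dQ_le (R : realType) (M : normedModType R) (G : monoid.Group.type)
  (act : G -> M -> M) x m g : dQ act x m <= `|act g x - m|.
Proof.
rewrite /dQ; apply: ge_inf; last by exists g.
by exists 0 => _ [h _ <-].
Qed.

Lemma dQ_ge0 (R : realType) (M : normedModType R) (G : monoid.Group.type)
  (act : G -> M -> M) x m : 0 <= dQ act x m.
Proof.
rewrite /dQ; apply: lb_le_inf; first by exists `|act monoid.one x - m|, monoid.one.
by move=> _ [h _ <-].
Qed.

Lemma dQ_fix (R : realType) (M : normedModType R) (G : monoid.Group.type)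
  (act : G -> M -> M) (H : linear_isometric_action act) t0 x :
  (forall g : G, act g t0 = t0) -> dQ act x t0 = `|x - t0|.
Proof.
move=> hf; rewrite /dQ.
have -> : [set `|act g x - t0| | g in [set: G]] = [set `|x - t0|].
  apply/seteqP; split => r /=.
    move=> [h _ <-]; rewrite -{1}(hf h) -(actB H).
    by case: H => _ _ _ ->.
  by move=> ->; exists monoid.one => //; case: H => -> _ _ _.
exact: inf1.
Qed.
Lemma meas_sq d (T : measurableType d) (R : realType) (M : normedModType R)
  (X : T -> M) (hX : borel_measurable_into X) (u : M) :
  measurable_fun setT (fun w => `|X w + u| ^+ 2).
Proof. exact: measurable_realfun.measurable_funX (meas_norm hX u). Qed.

Lemma meas_ip d (T : measurableType d) (R : realType) (M : completeNormedModType R)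
  (ip : M -> M -> R) (H : hilbert_inner ip)
  (X : T -> M) (hX : borel_measurable_into X) (v : M) :
  measurable_fun setT (fun w => ip (X w) v).
Proof.
have -> : (fun w => ip (X w) v) =
  (fun w => (`|X w + v| ^+ 2 - `|X w + 0| ^+ 2 - `|v| ^+ 2) * 2^-1).
  by apply/funext => w; rewrite addr0 (normD2 H); lra.
apply: measurable_realfun.measurable_funM; last exact: measurable_cst.
apply: measurable_realfun.measurable_funB; last exact: measurable_cst.
apply: measurable_realfun.measurable_funB; exact: meas_sq.
Qed.
Lemma arith_fin (R : realType) (p c : R) : 0 < p * p * c ->
  0 <= p / 2 * (p / 2) * c - p / 2 * c * p -> False.
Proof. move=> h1 h2; lra. Qed.

Unset Implicit Arguments.

Theorem mainTheorem18 (R : realType) (M : completeNormedModType R)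
  (ip : M -> M -> R) (G : monoid.Group.type) (act : G -> M -> M)
  (d : measure_display) (T : measurableType d) (P : probability T R)
  (X : T -> M) (t0 : M) :
  hilbert_inner ip ->
  linear_isometric_action act ->
  borel_measurable_into X ->
  (\int[P]_w (`|X w| ^+ 2)%:E < +oo)%E ->
  expectation_is P ip X t0 ->
  (forall g : G, act g t0 = t0) ->
  (exists y : M, in_support P X y /\ exists g : G, act g y != y) ->
  ~ is_frechet_mean P act X t0.
Proof.
move=> H Ha hX hint hE hfix [y [Ssupp [g hg]]] hmean.
have iso : forall h x, `|act h x| = `|x| by case: Ha.
pose z := y - t0.
pose v := act g z - z.
have ev : v = act g y - y.
  by rewrite /v /z (actB Ha) hfix opprB addrA subrK.
have vn0 : 0 < `|v| by rewrite normr_gt0 ev subr_eq0.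
pose c : R := `|v| ^+ 2.
have c0 : 0 < c by rewrite /c exprn_gt0.
pose r := `|v| / 4.
have r0 : 0 < r by rewrite /r divr_gt0.
pose S := X @^-1` ball y r.
have mS : measurable S by apply: hX; exact: ball_open.
have PS0 := Ssupp r r0.
have PS1 : (P S <= 1)%E by exact: probability_le1.
have PSf : P S \is a fin_num.
  by rewrite ge0_fin_numE ?(le_lt_trans PS1) ?ltry // ltW.
pose p := fine (P S).
have ePS : P S = p%:E by rewrite /p fineK.
have p0 : 0 < p by rewrite -lte_fin -ePS.
pose e := p / 2.
have e0 : 0 < e by rewrite /e divr_gt0.
pose m := t0 + e *: v.
pose A := fun w => (`|X w - t0| ^+ 2 : R).
pose K := 2 * e * ip t0 v + e ^+ 2 * c.
pose U := fun w => (A w + (- (2 * e)) * ip (X w) v + K - e * c * \1_S w : R).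
have key : forall w, (dQ act (X w) m) ^+ 2 <= U w.
  move=> w.
  pose Z := X w - t0.
  have hdq0 := dQ_ge0 act (X w) m.
  have eV : `|X w - m| ^+ 2 = A w - 2 * e * ip (X w) v + 2 * e * ip t0 v + e ^+ 2 * c.
    have -> : X w - m = Z - e *: v by rewrite /m /Z opprD addrA.
    rewrite (normB2 H) (ipC H) (ipZl H) (ipC H) (ipBl H) normrZ (gtr0_norm e0).
    rewrite /A /c -/Z; lra.
  rewrite /U indicE; case: (boolP (w \in S)) => hw; last first.
    have hle := dQ_le act (X w) m monoid.one.
    have e1 : act monoid.one (X w) = X w by case: Ha.
    rewrite e1 in hle.
    have h2 := ler_pM hdq0 hdq0 hle hle.
    rewrite mulr0 subr0 /K expr2; rewrite !expr2 in eV.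
    lra.
  rewrite mulr1.
  have hw' : `|y - X w| < r.
    by move: hw; rewrite in_setE /S /= -ball_normE /ball_ /=.
  have hle := dQ_le act (X w) m g.
  have h2 := ler_pM hdq0 hdq0 hle hle.
  have egZ : act g Z = act g (X w) - t0 by rewrite /Z (actB Ha) hfix.
  have egm : act g (X w) - m = act g Z - e *: v by rewrite egZ /m opprD addrA.
  rewrite egm in h2.
  have eW : `|act g Z - e *: v| ^+ 2 = A w - 2 * e * ip (act g Z) v + e ^+ 2 * c.
    rewrite (normB2 H) (ipC H) (ipZl H) (ipC H) normrZ (gtr0_norm e0) iso.
    rewrite /A /c -/Z; lra.
  pose u := act g Z - Z.
  have euv : u - v = act g (X w - y) - (X w - y).
    by rewrite /u /v egZ /Z /z (actB Ha) (actB Ha) hfix zm1.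
  have huv : `|u - v| <= 2 * `|X w - y|.
    by rewrite euv; apply: le_trans (ler_normB _ _) _; rewrite iso; lra.
  have hxy : `|X w - y| < `|v| / 4 by rewrite distrC.
  have hvu : `|v| <= `|u| + `|u - v|.
    by have := ler_normB u (u - v); rewrite opprB addrC subrK.
  have e2 := normB2 H u v.
  have eip : ip u v = ip (act g Z) v - ip Z v by rewrite /u (ipBl H).
  have hu0 := normr_ge0 u. have huv0 := normr_ge0 (u - v).
  have hab : `|u - v| <= `|u| by lra.
  have hsq := ler_pM huv0 huv0 hab hab.
  have hc : c <= 2 * ip u v by rewrite /c; rewrite !expr2 in e2; lra.
  have hZ : ip Z v = ip (X w) v - ip t0 v by rewrite /Z (ipBl H).
  rewrite !expr2 in h2 eW.
  rewrite expr2.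
  have hh : e * c <= e * (2 * ip u v) by rewrite ler_pM2l.
  rewrite eip hZ !mulrBr !mulrA in hh.
  rewrite /K /c !expr2 in eW hh *.
  lra.
have Ft0 : frechet_fun P act X t0 = (\int[P]_w (A w)%:E)%E.
  rewrite /frechet_fun; apply: eq_integral => w _.
  by rewrite (dQ_fix Ha) // /A.
have FmU : (frechet_fun P act X m <= \int[P]_w (U w)%:E)%E.
  apply: le_ge0_int => w; last by rewrite lee_fin.
  by rewrite lee_fin exprn_ge0 // dQ_ge0.
have mA : measurable_fun setT A by exact: (meas_sq hX (- t0)).
pose N := fun w => (`|X w| ^+ 2 : R).
have mN : measurable_fun setT N.
  have := meas_sq hX 0; congr measurable_fun; apply/funext => w.
  by rewrite /N addr0.
have iN : P.-integrable setT (fun w => (N w)%:E).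
  apply/integrableP; split; first exact/measurable_realfun.measurable_EFinP.
  rewrite (eq_integral (fun w => (N w)%:E)) //.
  by move=> w _; rewrite abse_EFin ger0_norm // /N exprn_ge0.
have igen : forall (a b : R), P.-integrable setT (fun w => (a * N w + b)%:E).
  move=> a b.
  rewrite (_ : (fun w => (a * N w + b)%:E) =
     ((fun w => a%:E * (N w)%:E) \+ (fun w => b%:E))%E); last first.
    by apply/funext => w; rewrite /= EFinD EFinM.
  apply: integrableD => //; last exact: int_cst.
  exact: integrableZl.
have iA : P.-integrable setT (fun w => (A w)%:E).
  apply: (int_bound (g := fun w => 2 * N w + 2 * `|t0| ^+ 2)) => //.
  move=> w; rewrite /A /N ger0_norm ?exprn_ge0 //.
  have h1 := ler_normB (X w) t0.
  have h2 := normr_ge0 (X w - t0).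
  have h3 := normr_ge0 (X w). have h4 := normr_ge0 t0.
  have h5 := ler_pM h2 h2 h1 h1.
  have h6 := sqr_ge0 (`|X w| - `|t0|).
  rewrite !expr2 in h6 *; nra.
have iI : P.-integrable setT (fun w => (ip (X w) v)%:E).
  apply: (int_bound (g := fun w => 1 * N w + c)) => //.
    exact: (meas_ip H hX).
  move=> w; rewrite /N /c.
  have h1 := normD2 H (X w) v. have h2 := normB2 H (X w) v.
  have h3 := exprn_ge0 2 (normr_ge0 (X w + v)).
  have h4 := exprn_ge0 2 (normr_ge0 (X w - v)).
  have h5 := exprn_ge0 2 (normr_ge0 (X w)).
  have h6 := exprn_ge0 2 (normr_ge0 v).
  rewrite ler_norml; apply/andP; split; lra.
have iS : P.-integrable setT (fun w => ((e * c)%:E * (\1_S w)%:E)%E).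
  by apply: integrableZl => //; exact: integrable_indic.
have eU : (fun w => (U w)%:E) = (fun w => ((A w)%:E + (- (2 * e))%:E * (ip (X w) v)%:E)
    + K%:E - (e * c)%:E * (\1_S w)%:E)%E.
  by apply/funext => w; rewrite /U EFinB !EFinD !EFinM.
have iAI : P.-integrable setT (fun w => ((A w)%:E + (- (2 * e))%:E * (ip (X w) v)%:E)%E).
  by apply: integrableD => //; exact: integrableZl.
have iAIK : P.-integrable setT (fun w => ((A w)%:E + (- (2 * e))%:E * (ip (X w) v)%:E
    + K%:E)%E).
  by apply: integrableD => //; exact: int_cst.
have IU : (\int[P]_w (U w)%:E = \int[P]_w (A w)%:E + (- (2 * e) * ip t0 v + K - e * c * p)%:E)%E.
  rewrite eU integralB //.
  rewrite integralD //; last exact: int_cst.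
  rewrite integralD //; last exact: integrableZl.
  rewrite integralZl //.
  rewrite integralZl //; last exact: integrable_indic.
  rewrite hE integral_cst // integral_indic //.
  rewrite [X in (K%:E * X)%E](_ : _ = 1%E); last exact: probability_setT.
  rewrite [X in ((e * c)%:E * X)%E](_ : _ = p%:E); last by rewrite setIT; exact: ePS.
  by rewrite mule1 !EFinB !EFinD !EFinM !addeA.
have Afin : (\int[P]_w (A w)%:E)%E \is a fin_num by exact: integrable_fin_num.
have := hmean m; rewrite Ft0.
move=> /le_trans /(_ FmU); rewrite IU -(fineK Afin) -EFinD lee_fin.
rewrite /K /e => hh.
have hpc := mulr_gt0 (mulr_gt0 p0 p0) c0.
set fa := fine _ in hh.
have hh2 : 0 <= (p / 2) ^+ 2 * c - p / 2 * c * p by lra.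
rewrite expr2 in hh2.
exact: (arith_fin hpc hh2).
Qed.
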